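(* Let $d\ge 1$ and $n\ge 1$. For a sequence $w=(i_1,\dots,i_n)$ which is a permutation of $[n]$, let $M_w(f_1,\dots,f_n)=f_{i_1}\vartriangleleft(f_{i_2}\vartriangleleft(\cdots\vartriangleleft(f_{i_{n-1}}\vartriangleleft f_{i_n})\cdots))$ and let $\ell_w\in\mathrm{RT}(n)$ be the linear tree with root $i_1$ in which $i_{m+1}$ is the unique child of $i_m$ for $m<n$. Then $w\mapsto\ell_w$ is a bijection from permutations of $[n]$ onto the linear trees in $\mathrm{RT}(n)$, $F(\ell_w)(f_1,\dots,f_n)=M_w(f_1,\dots,f_n)$ for all $f_1,\dots,f_n\in\mathcal{C}_d$, and for every family of real coefficients $(\lambda_w)_w$, the expression $\sum_w\lambda_w M_w$ is a left identity of the Witt algebra $W_d$ (i.e. vanishes for all $f_1,\dots,f_n\in W_d$) if and only if $\sum_w\lambda_w F(\ell_w)=0$ as a map $\mathcal{C}_d^n\to\mathcal{C}_d$. Hence left identities of $W_d$ correspond one-to-one to linear relations among elementary differentials of linear trees.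
   Context: A rooted tree on a finite vertex set $V\subset\mathbb{N}$ is a set $E$ of ordered pairs (an edge $(v,w)$ means $w$ is a child of $v$) such that exactly one vertex (the root) has no parent, every other vertex has exactly one parent, and every vertex is connected to the root by following parents; it is linear if every vertex has at most one child. $\mathrm{RT}(n)$ is the set of rooted trees on $[n]$; $\tau_v$ is the subtree of $v$ and its descendants. $\mathcal{C}_d=C^\infty(\mathbb{R}^d,\mathbb{R}^d)$, $g_j$ the $j$-th coordinate, $\partial_j=\partial/\partial x_j$. For $\tau$ with root $r$ whose children are $v_1,\dots,v_k$, recursively $F(\tau)((f^i)_{i\in V})=\sum_{j_1,\dots,j_k=1}^d F(\tau_{v_1})(\cdots)_{j_1}\cdots F(\tau_{v_k})(\cdots)_{j_k}\,\partial_{j_1}\cdots\partial_{j_k}f^r$, where $F(\tau_{v_m})$ is evaluated on the $f^i$ with $i$ a vertex of $\tau_{v_m}$ (single vertex: $F(\tau)=f^r$). The Witt algebra $W_d$ is the space of polynomial maps $\mathbb{R}^d\to\mathbb{R}^d$ with product $f\vartriangleleft g=\sum_{i=1}^d g_i\,\partial_i f$ (the same formula defines $\vartriangleleft$ on $\mathcal{C}_d$). A left identity of arity $n$ is a linear combination of the multilinear expressions $M_w$ (all compositions in the right input) that vanishes identically on $W_d$. *)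

(* Defs.v *)
From HB Require Import structures.
From mathcomp Require Import all_boot all_order all_algebra all_fingroup.
From mathcomp Require Import all_classical all_reals all_analysis.
From mathcomp Require mpoly.

Set Implicit Arguments.
Unset Strict Implicit.
Unset Printing Implicit Defensive.

Import Order.TTheory GRing.Theory Num.Theory.
Import numFieldNormedType.Exports.
Local Open Scope ring_scope.

Definition vfield (R : realType) (d : nat) := 'rV[R]_d -> 'rV[R]_d.

Definition ebasis (R : realType) (d : nat) (j : 'I_d) : 'rV[R]_d :=
  delta_mx 0 j.

Definition partial (R : realType) (d : nat) (j : 'I_d) (g : vfield R d)
  : vfield R d := fun x => derive g x (ebasis R j).

Definition iter_partial (R : realType) (d : nat) (js : seq 'I_d)
  (g : vfield R d) : vfield R d :=
  foldr (fun j h => partial j h) g js.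

Definition smooth (R : realType) (d : nat) (g : vfield R d) : Prop :=
  forall js : seq 'I_d,
    continuous (iter_partial js g) /\
    forall (j : 'I_d) (x : 'rV[R]_d), derivable (iter_partial js g) x (ebasis R j).

Definition witt (R : realType) (d : nat) (g : vfield R d) : Prop :=
  forall i : 'I_d, exists p : mpoly.mpoly d R,
    forall x : 'rV[R]_d, g x 0 i = mpoly.meval (fun k => x 0 k) p.

Definition tri (R : realType) (d : nat) (f g : vfield R d) : vfield R d :=
  fun x => \sum_(i < d) g x 0 i *: partial i f x.

Fixpoint Mseq (R : realType) (d n : nat) (f : 'I_n -> vfield R d)
  (s : seq 'I_n) : vfield R d :=
  match s with
  | [::] => fun _ => 0
  | [:: i] => f i
  | i :: s' => tri (f i) (Mseq f s')
  end.

(* the sequence w = (w 0, w 1, ..., w (n-1)) of a permutation of [n]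
   (vertices / indices are 0-based: [n] = 'I_n) *)
Definition Mw (R : realType) (d n : nat) (w : 'S_n) (f : 'I_n -> vfield R d)
  : vfield R d := Mseq f [seq w i | i <- enum 'I_n].

(* an edge (v, w) \in E means w is a child of v *)
Definition parents n (E : {set 'I_n * 'I_n}) (w : 'I_n) : {set 'I_n} :=
  [set v | (v, w) \in E].
Definition children n (E : {set 'I_n * 'I_n}) (v : 'I_n) : {set 'I_n} :=
  [set w | (v, w) \in E].

Definition to_parent n (E : {set 'I_n * 'I_n}) : rel 'I_n :=
  fun a b => (b, a) \in E.

Definition rooted_tree n (E : {set 'I_n * 'I_n}) : Prop :=
  exists r : 'I_n,
    [/\ (forall v, #|parents E v| = 0%N <-> v = r),
        (forall v, v != r -> #|parents E v| = 1%N)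
      & (forall v, connect (to_parent E) v r)].

Definition linear_tree n (E : {set 'I_n * 'I_n}) : Prop :=
  rooted_tree E /\ forall v, (#|children E v| <= 1)%N.

Definition root_of n (E : {set 'I_n * 'I_n}) : option 'I_n :=
  [pick r | #|parents E r| == 0%N].

(* F(tau_v)(f) computed recursively with fuel k (k >= depth suffices):
   F(tau_v) = sum_{j_1..j_k} F(tau_{v_1})_{j_1} ... F(tau_{v_k})_{j_k}
                d_{j_1} ... d_{j_k} f^v,  v_1, ..., v_k the children of v *)
Fixpoint Fsub (R : realType) (d n : nat) (E : {set 'I_n * 'I_n})
  (f : 'I_n -> vfield R d) (k : nat) (v : 'I_n) : vfield R d :=
  match k with
  | 0 => f v
  | k'.+1 =>
    let cs := enum (children E v) in
    fun x =>
      \sum_(t : (size cs).-tuple 'I_d)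
        (\prod_(m < size cs) Fsub E f k' (nth v cs m) x 0 (tnth t m))
          *: iter_partial t (f v) x
  end.

Definition Ftree (R : realType) (d n : nat) (E : {set 'I_n * 'I_n})
  (f : 'I_n -> vfield R d) : vfield R d :=
  match root_of E with
  | Some r => Fsub E f n r
  | None => fun _ => 0
  end.

Definition lw n (w : 'S_n) : {set 'I_n * 'I_n} :=
  [set e | [exists i : 'I_n, exists j : 'I_n,
             (nat_of_ord j == i.+1) && (e == (w i, w j))]].

(* Main.v *)
Require Import Defs.
From HB Require Import structures.
From mathcomp Require Import all_boot all_order all_algebra all_fingroup.
From mathcomp Require Import mpoly.
From mathcomp Require Import all_classical all_reals all_analysis.

Import Order.TTheory GRing.Theory Num.Theory.
Import numFieldNormedType.Exports.
Local Open Scope ring_scope.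
Set Implicit Arguments.
Unset Strict Implicit.

Section Aff.
Local Open Scope classical_set_scope.
Variables (R : realType) (d : nat).

Definition aff (c : 'rV[R]_d) (Q : 'M[R]_d) : vfield R d := fun y => c + y *m Q.

Lemma aff_quot c Q a v (h : R) : h != 0 ->
  h^-1 *: ((aff c Q \o shift a) (h *: v) - aff c Q a) = v *m Q.
Proof.
move=> h0; rewrite /aff /= mulmxDl opprD addrACA subrr add0r addrK -scalemxAl scalerA mulVf //.
by rewrite scale1r.
Qed.

Lemma aff_cvg c Q a v :
  (fun h : R => h^-1 *: ((aff c Q \o shift a) (h *: v) - aff c Q a)) @ 0^' --> v *m Q.
Proof.
apply: cvg_near_cst; near=> h; rewrite aff_quot //.
near: h; exact: nbhs_dnbhs_neq.
Unshelve. all: by end_near.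
Qed.

Lemma aff_derivable c Q a v : derivable (aff c Q) a v.
Proof. apply: cvgP; exact: aff_cvg. Qed.

Lemma aff_derive c Q a v : derive (aff c Q) a v = v *m Q.
Proof. apply: cvg_lim; [exact: norm_hausdorff | exact: aff_cvg]. Qed.

Lemma aff_partial c Q j : partial j (aff c Q) = aff (row j Q) 0.
Proof.
apply: funext => y; rewrite /partial aff_derive /aff mulmx0 addr0 rowE.
by [].
Qed.

Lemma aff_continuous c Q : continuous (aff c Q).
Proof.
rewrite /aff.
have -> : (fun y : 'rV[R]_d => c + y *m Q) =
   (fun y => c + \sum_(k <- enum 'I_d) y 0 k *: row k Q).
  by apply: funext => y; rewrite mulmx_sum_row big_enum.
have H : forall s, continuous (fun y : 'rV[R]_d => \sum_(k <- s) y 0 k *: row k Q).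
  elim => [|k s IH].
    have -> : (fun y : 'rV[R]_d => \sum_(k <- [::]) y 0 k *: row k Q) = fun _ => 0.
      by apply: funext => y; rewrite big_nil.
    move=> y; exact: cst_continuous.
  have -> : (fun y : 'rV[R]_d => \sum_(k0 <- k :: s) y 0 k0 *: row k0 Q) =
     (fun y => y 0 k *: row k Q + \sum_(k0 <- s) y 0 k0 *: row k0 Q).
    by apply: funext => y; rewrite big_cons.
  move=> y.
  have h1 := cvgZr_tmp (a := row k Q) (@coord_continuous R 1 d 0 k y).
  have h2 := cvgD (h1 (nbhs_filter y)) (IH y). exact: h2.
move=> y; exact: (cvgD (cvg_cst c) (H _ y)).
Qed.

Lemma aff_smooth c Q : smooth (aff c Q).
Proof.
move=> js; have [c' [Q' ->]] : exists c' Q', iter_partial js (aff c Q) = aff c' Q'.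
  elim: js => [|j js [c' [Q' IH]]]; first by exists c, Q.
  by exists (row j Q'), 0; rewrite /= IH aff_partial.
split; first exact: aff_continuous.
move=> j x; exact: aff_derivable.
Qed.

Lemma aff_witt c Q : witt (aff c Q).
Proof.
move=> i.
pose p : mpoly.mpoly d R := mpoly.mpolyC d (c 0 i).
pose X (k : 'I_d) : mpoly.mpoly d R := mpoly.mpolyX R (mpoly.mnm1 k).
pose q : mpoly.mpoly d R := \sum_(k < d) (Q k i *: X k).
exists (p + q).
move=> x; rewrite mpoly.mevalD /p /q mpoly.mevalC raddf_sum /aff !mxE.
congr (_ + _); apply: eq_bigr => k _.
by rewrite /= mpoly.mevalZ /X mpoly.mevalXU mulrC.
Qed.

End Aff.

Section Comb.
Variable n : nat.
Implicit Types (w : 'S_n).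

Lemma lwP w u v : ((u, v) \in lw w) = (val ((w^-1)%g v) == (val ((w^-1)%g u)).+1)%N.
Proof.
rewrite inE; apply/existsP/eqP.
- case=> i /existsP [j /andP [/eqP hj /eqP [-> ->]]].
  by rewrite !permK.
- move=> h; exists ((w^-1)%g u); apply/existsP; exists ((w^-1)%g v).
  by rewrite !permKV h !eqxx.
Qed.

Lemma card_val m : #|[set i : 'I_n | val i == m]| = (m < n)%N.
Proof.
case: (ltnP m n) => hm.
  have -> : [set i : 'I_n | val i == m] = [set Ordinal hm].
    by apply/setP => i; rewrite !inE.
  by rewrite cards1.
apply/eqP; rewrite cards_eq0; apply/eqP/setP => i; rewrite !inE.
apply/negbTE; apply: contraTN hm => /eqP <-; by rewrite -ltnNge ltn_ord.
Qed.

Lemma card_pre w (P : pred 'I_n) : #|[set u | P ((w^-1)%g u)]| = #|[set i | P i]|.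
Proof.
have -> : [set u | P ((w^-1)%g u)] = (fun u => (w^-1)%g u) @^-1: [set i | P i].
  by apply/setP => u; rewrite !inE.
by rewrite card_preimset //; exact: perm_inj.
Qed.

Lemma card_parents w v : #|parents (lw w) v| = (val ((w^-1)%g v) != 0%N).
Proof.
have -> : parents (lw w) v =
   [set u | (fun i : 'I_n => val ((w^-1)%g v) == i.+1) ((w^-1)%g u)].
  by apply/setP => u; rewrite /parents /children finset.in_set lwP finset.in_set.
rewrite (card_pre w (fun i : 'I_n => val ((w^-1)%g v) == i.+1)).
case E: (val ((w^-1)%g v)) => [|k].
  apply/eqP; rewrite cards_eq0; apply/eqP/setP => i; rewrite !inE //.
have -> : [set i : 'I_n | k.+1 == i.+1] = [set i | val i == k].
  by apply/setP => i; rewrite !inE eqSS eq_sym.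
rewrite card_val /=.
have := ltn_ord ((w^-1)%g v); rewrite E => h.
by rewrite (ltn_trans (ltnSn k) h).
Qed.

Lemma card_children w v : #|children (lw w) v| = ((val ((w^-1)%g v)).+1 < n)%N.
Proof.
have -> : children (lw w) v =
   [set u | (fun i : 'I_n => val i == (val ((w^-1)%g v)).+1) ((w^-1)%g u)].
  by apply/setP => u; rewrite /parents /children finset.in_set lwP finset.in_set.
by rewrite (card_pre w (fun i : 'I_n => val i == (val ((w^-1)%g v)).+1)) card_val.
Qed.

End Comb.

Section Comb1.
Variable n : nat.
Implicit Types (w : 'S_n.+1).

Lemma parents0 w v : (#|parents (lw w) v| = 0%N) <-> v = w ord0.
Proof.
rewrite card_parents; split.
  case E: (val ((w^-1)%g v)) => [|k] //= _.
  have h : (w^-1)%g v = ord0 by apply: val_inj.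
  by rewrite -h permKV.
by move=> ->; rewrite permK.
Qed.

Lemma lw_linear w : linear_tree (lw w).
Proof.
split; last by move=> v; rewrite card_children; case: (_ < _)%N.
exists (w ord0); split.
- exact: parents0.
- move=> v hv; rewrite card_parents.
  case E: (val ((w^-1)%g v)) => [|k] //.
  have h : (w^-1)%g v = ord0 by apply: val_inj.
  by move: hv; rewrite -h permKV eqxx.
- move=> v.
  move E: (val ((w^-1)%g v)) => k.
  elim: k v E => [|k IH] v E.
    have h : (w^-1)%g v = ord0 by apply: val_inj.
    by rewrite -h permKV connect0.
  have hk : (k < n.+1)%N by have := ltn_ord ((w^-1)%g v); rewrite E; apply: ltn_trans.
  apply: (connect_trans (y := w (Ordinal hk))); last first.
    by apply: IH; rewrite permK.
  apply: connect1; rewrite /to_parent lwP permK E //.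
Qed.

Lemma lw_inj : injective (@lw n.+1).
Proof.
move=> w1 w2 E.
have H : forall k (hk : (k < n.+1)%N), w1 (Ordinal hk) = w2 (Ordinal hk).
  elim=> [|k IH] hk.
    have -> : Ordinal hk = ord0 by apply: val_inj.
    apply/(parents0 w2); rewrite -E; exact/(parents0 w1).
  have hk' : (k < n.+1)%N by apply: ltn_trans hk.
  have e : (w1 (Ordinal hk'), w1 (Ordinal hk)) \in lw w2.
    by rewrite -E lwP !permK.
  move: e; rewrite lwP IH permK /= => /eqP e.
  have e' : (w2^-1)%g (w1 (Ordinal hk)) = Ordinal hk by apply: val_inj.
  by rewrite -(congr1 w2 e') permKV.
apply/permP => i; case: i => i hi; exact: H.
Qed.

End Comb1.

Section Surj.
Variable n : nat.
Variable E : {set 'I_n.+1 * 'I_n.+1}.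
Hypothesis hE : linear_tree E.

Definition nxt (u : 'I_n.+1) : 'I_n.+1 := odflt u [pick c in children E u].

Lemma nxtE u v : (u, v) \in E -> nxt u = v.
Proof.
move=> huv; have hv : v \in children E u by rewrite /children finset.in_set.
rewrite /nxt; case: pickP => [c hc | h] /=.
  have := hE.2 u; move/card_le1_eqP => h1; exact: h1.
by move: (h v); rewrite hv.
Qed.

Lemma lw_surj : exists w : 'S_n.+1, lw w = E.
Proof.
have [hrt hch] := hE; have [r [hr1 hr2 hr3]] := hrt.
have reach : forall v, fconnect nxt r v.
  move=> v; have /connectP [p hp hl] := hr3 v.
  elim: p v hp hl => [|u p IH] v /=.
    by move=> _ ->; exact: connect0.
  move=> /andP [h1 h2] hl.
  apply: (connect_trans (IH u h2 hl)); apply: connect1; rewrite /= (nxtE h1) //.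
have hord : fingraph.order nxt r = n.+1.
  rewrite /fingraph.order (eq_card (B := predT)) ?card_ord //.
pose wf (i : 'I_n.+1) := iter i nxt r.
have wf_inj : injective wf.
  move=> i j; rewrite /wf => e.
  have u := orbit_uniq nxt r; rewrite /fingraph.orbit hord in u.
  apply: val_inj; apply/eqP.
  rewrite -(nth_uniq r (s := traject nxt r n.+1)) ?size_traject;
    try exact: ltn_ord; try exact: u.
  rewrite !nth_traject; try exact: ltn_ord.
  exact/eqP.
pose w := perm wf_inj.
have sub : forall u v, (u, v) \in lw w -> (u, v) \in E.
  move=> u v; rewrite lwP => /eqP e.
  have e' : nat_of_ord ((w^-1)%g v) = (nat_of_ord ((w^-1)%g u)).+1 := e.
  have hv : v = nxt u.
    move: (permKV w v) (permKV w u) e'.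
    move: ((w^-1)%g v) ((w^-1)%g u) => j i.
    rewrite !permE /wf => <- <- ->.
    by rewrite iterS.
  rewrite /nxt in hv; move: hv; case: pickP => [c hc | h] /= hv.
    by move: hc; rewrite hv /children finset.in_set.
  by move: e'; rewrite hv => /eqP; rewrite eq_sym (gtn_eqF (ltnSn _)).
exists w; apply/setP => [[a b]]; apply/idP/idP; first exact: sub.
move=> hab.
have hb : b != r.
  apply/negP => /eqP hb; have := proj2 (hr1 b) hb.
  move/eqP; rewrite cards_eq0 => /eqP/setP/(_ a).
  by rewrite /parents finset.in_set hab inE.
have hw0 : w ord0 = r by rewrite permE.
case E0: (nat_of_ord ((w^-1)%g b)) => [|j].
  have h0 : (w^-1)%g b = ord0 by apply: val_inj.
  by move: hb; rewrite -(permKV w b) h0 hw0 eqxx.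
have hj : (j < n.+1)%N by have := ltn_ord ((w^-1)%g b); rewrite E0; apply: ltn_trans.
have hlw : (w (Ordinal hj), b) \in lw w by rewrite lwP permK; apply/eqP; exact: E0.
have hE' := sub _ _ hlw.
have /cards1P [x hx] : #|parents E b| == 1%N by rewrite hr2.
have ha : a \in parents E b by rewrite /parents finset.in_set.
have ha' : w (Ordinal hj) \in parents E b by rewrite /parents finset.in_set.
move: ha ha'; rewrite hx !finset.in_set1 => /eqP -> /eqP <-; exact: hlw.
Qed.
End Surj.

Section FsubSec.
Variables (R : realType) (d n : nat) (w : 'S_n) (f : 'I_n -> vfield R d).

Lemma sum_tuple0 (V : zmodType) (F : 0.-tuple 'I_d -> V) :
  \sum_(t : 0.-tuple 'I_d) F t = F [tuple].
Proof. rewrite (big_pred1 [tuple]) // => t /=; apply/esym/eqP; exact: tuple0. Qed.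

Lemma sum_tuple1 (V : zmodType) (F : 1.-tuple 'I_d -> V) :
  \sum_(t : 1.-tuple 'I_d) F t = \sum_(j < d) F [tuple j].
Proof.
rewrite (reindex (fun j : 'I_d => [tuple j])) //.
exists (fun t : 1.-tuple 'I_d => thead t) => [j _ | t _].
  by rewrite /thead tnth0.
apply: val_inj; case: t => s hs /=; case: s hs => [|a [|b s]] //= hs.
Qed.

Lemma children_lw (i : 'I_n) :
  children (lw w) (w i) = [set u | val ((w^-1)%g u) == i.+1].
Proof. by apply/setP => u; rewrite /children finset.in_set lwP permK finset.in_set. Qed.

Lemma Fsub_lw k (i : 'I_n) : (n <= i + k)%N ->
  Fsub (lw w) f k (w i) = Mseq f (map w (drop i (enum 'I_n))).
Proof.
elim: k i => [|k IH] i hk.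
  by move: hk; rewrite addn0 leqNgt ltn_ord.
rewrite (drop_nth i) ?size_enum_ord ?ltn_ord // nth_ord_enum.
case: (ltnP i.+1 n) => hi.
- have hch : children (lw w) (w i) = [set w (Ordinal hi)].
    rewrite children_lw; apply/setP => u; rewrite !finset.in_set finset.in_set1.
    apply/eqP/eqP => [h | ->]; last by rewrite permK.
    by rewrite -(permKV w u); congr (w _); apply: val_inj.
  rewrite (drop_nth (Ordinal hi)) ?size_enum_ord //.
  have -> : nth (Ordinal hi) (enum 'I_n) i.+1 = Ordinal hi.
    exact: (nth_ord_enum (Ordinal hi) (Ordinal hi)).
  have IH' := IH (Ordinal hi); rewrite /= addSnnS in IH'.
  rewrite (drop_nth (Ordinal hi)) ?size_enum_ord // in IH'.
  have e2 : nth (Ordinal hi) (enum 'I_n) i.+1 = Ordinal hi.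
    exact: (nth_ord_enum (Ordinal hi) (Ordinal hi)).
  rewrite e2 in IH'.
  apply: funext => x /=.
  rewrite hch enum_set1 /= sum_tuple1 /tri.
  apply: eq_bigr => j _.
  rewrite big_ord1 /= (IH' hk).
  by [].
- have hch : children (lw w) (w i) = @finset.set0 _ :> {set 'I_n}.
    rewrite children_lw; apply/setP => u; rewrite !inE.
    apply/negbTE; rewrite neq_ltn; apply/orP; left.
    exact: leq_trans (ltn_ord _) hi.
  rewrite drop_oversize ?size_enum_ord //.
  apply: funext => x /=.
  by rewrite hch enum_set0 /= sum_tuple0 big_ord0 scale1r.
Qed.

End FsubSec.

Section Main.
Variables (R : realType) (d n : nat).

Lemma Mseq_local (f g : 'I_n -> vfield R d) x s :
  (forall i, f i x = g i x) ->
  (forall i j, partial j (f i) x = partial j (g i) x) ->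
  Mseq f s x = Mseq g s x.
Proof.
move=> H1 H2; elim: s => [|i s IH] //.
case: s IH => [|j s] IH; first exact: H1.
have -> : Mseq f [:: i, j & s] = tri (f i) (Mseq f (j :: s)) by [].
have -> : Mseq g [:: i, j & s] = tri (g i) (Mseq g (j :: s)) by [].
by rewrite /tri; apply: eq_bigr => k _; rewrite IH H2.
Qed.

Lemma approx (f : 'I_n -> vfield R d) x : exists A : 'I_n -> vfield R d,
  [/\ (forall i, witt (A i)), (forall i, smooth (A i)) &
      forall s, Mseq A s x = Mseq f s x].
Proof.
pose P i : 'M[R]_d := \matrix_(j, k) partial j (f i) x 0 k.
exists (fun i => aff (f i x - x *m P i) (P i)); split.
- move=> i; exact: aff_witt.
- move=> i; exact: aff_smooth.
- move=> s; apply: Mseq_local => [i | i j].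
    by rewrite /aff subrK.
  rewrite aff_partial /aff mulmx0 addr0.
  by apply/rowP => k; rewrite !mxE.
Qed.

End Main.

Lemma Ftree_lw (R : realType) (d n : nat) (w : 'S_n.+1) (f : 'I_n.+1 -> vfield R d) :
  Ftree (lw w) f = Mw w f.
Proof.
rewrite /Ftree /root_of; case: pickP => [r hr | h].
  have -> : r = w ord0 by apply/parents0; apply/eqP.
  by rewrite (@Fsub_lw R d n.+1 w f n.+1 ord0) ?drop0.
by have := h (w ord0); rewrite (proj2 (parents0 _ _) erefl) eqxx.
Qed.

Unset Implicit Arguments.
Set Strict Implicit.

Theorem proposition4p5 (R : realType) (d n : nat) (hd : (1 <= d)%N)
    (hn : (1 <= n)%N) :
  [/\ (* w |-> l_w is a bijection onto the linear trees in RT(n) *)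
      (forall w : 'S_n, linear_tree (lw w)),
      injective (@lw n),
      (forall E : {set 'I_n * 'I_n}, linear_tree E -> exists w : 'S_n, lw w = E),
      (* F(l_w) = M_w on C_d *)
      (forall (w : 'S_n) (f : 'I_n -> vfield R d),
          (forall i, smooth (f i)) -> Ftree (lw w) f = Mw w f)
    & (* left identities <-> linear relations among F(l_w) *)
      (forall lambda : 'S_n -> R,
          (forall f : 'I_n -> vfield R d, (forall i, witt (f i)) ->
             forall x, \sum_(w : 'S_n) lambda w *: Mw w f x = 0)
          <->
          (forall f : 'I_n -> vfield R d, (forall i, smooth (f i)) ->
             forall x, \sum_(w : 'S_n) lambda w *: Ftree (lw w) f x = 0))].
Proof.
case: n hn => [//|n] _.
split.
- exact: lw_linear.
- exact: lw_inj.
- move=> E hE; exact: lw_surj hE.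
- move=> w f _; exact: Ftree_lw.
- move=> lambda; split => H f hf x.
    have [A [hA1 hA2 hA3]] := approx f x.
    rewrite -[RHS](H A hA1 x); apply: eq_bigr => w _.
    by rewrite Ftree_lw /Mw hA3.
  have [A [hA1 hA2 hA3]] := approx f x.
  rewrite -[RHS](H A hA2 x); apply: eq_bigr => w _.
  by rewrite Ftree_lw /Mw hA3.
Qed.
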